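(* Let $G_1$ and $G_2$ be profinite-$C$ groups. Then $G_1\times G_2$ is a profinite-$C$ group.
   Context: A permutable complement of a subgroup $H$ of a group $G$ is a subgroup $K$ with $G=HK$ and $H\cap K=1$. A profinite group $G$ is a profinite-$C$ group if every closed subgroup of $G$ has a closed permutable complement in $G$. *)

(* Defs.v *)
From HB Require Import structures.
From mathcomp Require Import all_boot all_order all_algebra.
From mathcomp Require Import all_classical all_reals all_analysis.

Set Implicit Arguments.
Unset Strict Implicit.
Unset Printing Implicit Defensive.

Local Open Scope classical_set_scope.

Record group_ops (T : Type) := GroupOps {
  gmul : T -> T -> T;
  ginv : T -> T;
  gone : T }.

Definition is_group (T : Type) (g : group_ops T) : Prop :=
  [/\ forall x y z, gmul g x (gmul g y z) = gmul g (gmul g x y) z,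
      forall x, gmul g (gone g) x = x,
      forall x, gmul g x (gone g) = x,
      forall x, gmul g (ginv g x) x = gone g &
      forall x, gmul g x (ginv g x) = gone g].

Definition is_topological_group (T : topologicalType) (g : group_ops T) : Prop :=
  [/\ is_group g,
      continuous (fun p : T * T => gmul g p.1 p.2) &
      continuous (ginv g)].

Definition is_profinite (T : topologicalType) (g : group_ops T) : Prop :=
  [/\ is_topological_group g,
      compact [set: T],
      hausdorff_space T &
      totally_disconnected [set: T]].

Definition is_subgroup (T : Type) (g : group_ops T) (H : set T) : Prop :=
  [/\ H (gone g),
      forall x y, H x -> H y -> H (gmul g x y) &
      forall x, H x -> H (ginv g x)].

Definition is_closed_subgroup (T : topologicalType) (g : group_ops T) (H : set T) :=
  is_subgroup g H /\ closed H.

Definition permutable_complement (T : Type) (g : group_ops T) (H K : set T) : Prop :=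
  [/\ is_subgroup g K,
      (forall x : T, exists2 h, H h & exists2 k, K k & x = gmul g h k) &
      H `&` K = [set gone g]].

Definition is_profinite_C (T : topologicalType) (g : group_ops T) : Prop :=
  is_profinite g /\
  forall H : set T, is_closed_subgroup g H ->
    exists K : set T, is_closed_subgroup g K /\ permutable_complement g H K.

Definition prod_group_ops (T1 T2 : Type) (g1 : group_ops T1) (g2 : group_ops T2)
  : group_ops (T1 * T2) :=
  GroupOps (fun x y => (gmul g1 x.1 y.1, gmul g2 x.2 y.2))
           (fun x => (ginv g1 x.1, ginv g2 x.2))
           (gone g1, gone g2).

(* Main.v *)
Require Import Defs.
From mathcomp Require Import all_boot all_order all_algebra.
From mathcomp Require Import all_classical all_reals all_analysis.

Set Implicit Arguments.
Unset Strict Implicit.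
Unset Printing Implicit Defensive.
Local Open Scope classical_set_scope.

Section Top.
Context {X Y : topologicalType}.

Lemma fst_cont : continuous (@fst X Y).
Proof. move=> p; exact: cvg_fst. Qed.

Lemma snd_cont : continuous (@snd X Y).
Proof. move=> p; exact: cvg_snd. Qed.

Lemma pair_cont {Z : topologicalType} (f : Z -> X) (g : Z -> Y) :
  continuous f -> continuous g -> continuous (fun z => (f z, g z)).
Proof. move=> fc gc z; exact: (cvg_pair (fc z) (gc z)). Qed.

Lemma hausdorff_pair : hausdorff_space X -> hausdorff_space Y ->
  hausdorff_space (X * Y)%type.
Proof.
move=> hX hY [p1 p2] [q1 q2] cl.
have c1 : cluster (nbhs p1) q1.
  move=> A B nA nB.
  have := cl _ _ (@fst_cont (p1, p2) _ nA) (@fst_cont (q1, q2) _ nB).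
  by case=> [[x y]] [/= Ax Bx]; exists x.
have c2 : cluster (nbhs p2) q2.
  move=> A B nA nB.
  have := cl _ _ (@snd_cont (p1, p2) _ nA) (@snd_cont (q1, q2) _ nB).
  by case=> [[x y]] [/= Ax Bx]; exists y.
by rewrite (hX _ _ c1) (hY _ _ c2).
Qed.

Lemma td_pair : totally_disconnected [set: X] -> totally_disconnected [set: Y] ->
  totally_disconnected [set: (X * Y)%type].
Proof.
move=> tX tY x _; apply/seteqP; split; last first.
  by move=> _ ->; apply: connected_component_refl.
move=> z [C [Cx _ cC] Cz].
have e1 : z.1 = x.1.
  have : fst @` C `<=` connected_component [set: X] x.1.
    apply: connected_component_max => //.
    apply: (@connected_continuous_connected _ _ C fst cC).
    by apply: continuous_subspaceT => p; exact: (@fst_cont p).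
  rewrite tX // => /(_ z.1); apply; by exists z.
have e2 : z.2 = x.2.
  have : snd @` C `<=` connected_component [set: Y] x.2.
    apply: connected_component_max => //.
    apply: (@connected_continuous_connected _ _ C snd cC).
    by apply: continuous_subspaceT => p; exact: (@snd_cont p).
  rewrite tY // => /(_ z.2); apply; by exists z.
by rewrite /= (surjective_pairing z) e1 e2 -surjective_pairing.
Qed.

Lemma closed_setX' (A : set X) (B : set Y) : closed A -> closed B ->
  closed (A `*` B).
Proof.
move=> cA cB.
have -> : A `*` B = fst @^-1` A `&` snd @^-1` B by [].
apply: closedI; apply: preimage_closed => //.
- by move=> p _; exact: (@fst_cont p).
- by move=> p _; exact: (@snd_cont p).
Qed.

End Top.


Section Grp.
Variables (T : Type) (g : group_ops T).
Hypothesis hg : is_group g.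

Lemma inv_one : ginv g (gone g) = gone g.
Proof. by case: hg => _ _ h3 h4 _; rewrite -[LHS]h3 h4. Qed.

Lemma one_one : gmul g (gone g) (gone g) = gone g.
Proof. by case: hg => _ h2 _ _ _; rewrite h2. Qed.

Lemma sub_one (H : set T) : is_subgroup g H -> H (gone g).
Proof. by case. Qed.

Lemma meet_one (H K : set T) x : H `&` K = [set gone g] -> H x -> K x -> x = gone g.
Proof. by move=> E Hx Kx; have : (H `&` K) x by []; rewrite E. Qed.

End Grp.

Lemma prod_group (T1 T2 : Type) (g1 : group_ops T1) (g2 : group_ops T2) :
  is_group g1 -> is_group g2 -> is_group (prod_group_ops g1 g2).
Proof.
case=> a1 b1 c1 d1 e1 [a2 b2 c2 d2 e2]; split => /=.
- by move=> x y z; rewrite a1 a2.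
- by move=> [x y] /=; rewrite b1 b2.
- by move=> [x y] /=; rewrite c1 c2.
- by move=> [x y] /=; rewrite d1 d2.
- by move=> [x y] /=; rewrite e1 e2.
Qed.

Lemma prod_profinite (T1 T2 : topologicalType) (g1 : group_ops T1) (g2 : group_ops T2) :
  is_profinite g1 -> is_profinite g2 ->
  is_profinite (T := (T1 * T2)%type) (prod_group_ops g1 g2).
Proof.
case=> [[G1 m1 i1] c1 h1 t1] [[G2 m2 i2] c2 h2 t2]; split.
- split; first exact: prod_group.
  + apply: pair_cont => /=.
    * have -> : (fun x : (T1 * T2) * (T1 * T2) => gmul g1 x.1.1 x.2.1) =
        (fun p : T1 * T1 => gmul g1 p.1 p.2) \o
        (fun x : (T1 * T2) * (T1 * T2) => (x.1.1, x.2.1)) by [].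
      move=> p; apply: continuous_comp; last exact: m1.
      apply: pair_cont => q.
      - exact: (continuous_comp (@fst_cont _ _ q) (@fst_cont _ _ q.1)).
      - exact: (continuous_comp (@snd_cont _ _ q) (@fst_cont _ _ q.2)).
    * have -> : (fun x : (T1 * T2) * (T1 * T2) => gmul g2 x.1.2 x.2.2) =
        (fun p : T2 * T2 => gmul g2 p.1 p.2) \o
        (fun x : (T1 * T2) * (T1 * T2) => (x.1.2, x.2.2)) by [].
      move=> p; apply: continuous_comp; last exact: m2.
      apply: pair_cont => q.
      - exact: (continuous_comp (@fst_cont _ _ q) (@snd_cont _ _ q.1)).
      - exact: (continuous_comp (@snd_cont _ _ q) (@snd_cont _ _ q.2)).
  + apply: pair_cont => q /=.
    * exact: (continuous_comp (@fst_cont _ _ q) (i1 q.1)).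
    * exact: (continuous_comp (@snd_cont _ _ q) (i2 q.2)).
- by rewrite -setXTT; exact: compact_setX.
- exact: hausdorff_pair.
- exact: td_pair.
Qed.

Theorem lemma2p3 (T1 T2 : topologicalType) (g1 : group_ops T1) (g2 : group_ops T2) :
  is_profinite_C g1 -> is_profinite_C g2 ->
  is_profinite_C (T := (T1 * T2)%type) (prod_group_ops g1 g2).
Proof.
case=> P1 C1 [P2 C2]; split; first exact: prod_profinite.
have [[G1 _ _] cT1 hT1 _] := P1.
have [[G2 _ _] cT2 hT2 _] := P2.
have G := prod_group G1 G2.
case: G1 => a1 b1 c1 d1 e1; case: G2 => a2 b2 c2 d2 e2.
have inv1 : ginv g1 (gone g1) = gone g1 by rewrite -[LHS]c1 d1.
move=> H [[H1 Hm Hi] cH].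
pose H2 := [set y | H (gone g1, y)].
pose P := [set x | exists y, H (x, y)].
have sP : is_subgroup g1 P.
  split.
  - by exists (gone g2).
  - by move=> x x' [y Hy] [y' Hy']; exists (gmul g2 y y'); exact: (Hm _ _ Hy Hy').
  - by move=> x [y Hy]; exists (ginv g2 y); exact: (Hi _ Hy).
have cP : closed P.
  have -> : P = fst @` H.
    apply/seteqP; split => [x [y Hy]|_ [[x y] Hy <-]]; last by exists y.
    by exists (x, y).
  apply: compact_closed => //; apply: continuous_compact.
    by apply: continuous_subspaceT => p; exact: (@fst_cont _ _ p).
  apply: (@subclosed_compact _ H setT cH _ (@subsetT _ H)).
  by have := compact_setX cT1 cT2; rewrite setXTT.
have sH2 : is_subgroup g2 H2.
  split.
  - exact: H1.
  - move=> y y' Hy Hy'; have := Hm _ _ Hy Hy'.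
    by rewrite /= b1.
  - move=> y Hy; have := Hi _ Hy.
    by rewrite /= inv1.
have cH2 : closed H2.
  apply: (preimage_closed (f := fun y => (gone g1, y))) => //.
  by move=> y _; apply: pair_cont => p; [exact: cvg_cst | exact: cvg_id].
have [K1 [[sK1 cK1] [sK1' dK1 iK1]]] := C1 P (conj sP cP).
have [K2 [[sK2 cK2] [sK2' dK2 iK2]]] := C2 H2 (conj sH2 cH2).
have sK : is_subgroup (prod_group_ops g1 g2) (K1 `*` K2).
  split.
  - by split; [case: sK1 | case: sK2].
  - move=> [x y] [x' y'] [/= Kx Ky] [/= Kx' Ky']; split.
    + by case: sK1 => _ + _; apply.
    + by case: sK2 => _ + _; apply.
  - move=> [x y] [/= Kx Ky]; split.
    + by case: sK1 => _ _; apply.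
    + by case: sK2 => _ _; apply.
exists (K1 `*` K2); split; first split.
- exact: sK.
- exact: closed_setX'.
- split.
  + exact: sK.
  + move=> [a b].
    have [x [y Hxy] [k1 Kk1 ak]] := dK1 a.
    have [h2 Hh2 [k2 Kk2 bk]] := dK2 (gmul g2 (ginv g2 y) b).
    exists (gmul g1 x (gone g1), gmul g2 y h2); first exact: (Hm _ _ Hxy Hh2).
    exists (k1, k2) => //=.
    rewrite c1 -ak -a2 -bk a2 e2 b2; done.
  + apply/seteqP; split.
    * move=> [x y] [Hxy [/= Kx Ky]].
      have ex : x = gone g1 by apply: (meet_one iK1) => //; exists y.
      subst x.
      have ey : y = gone g2 by apply: (meet_one iK2).
      by subst y.
    * move=> _ ->; split; first exact: H1.
      by split; [case: sK1 | case: sK2].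
Qed.
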